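(* Let $m,n,k$ be positive integers and $i,j$ non-negative integers such that $i<\frac{n}{2}-1$ and $j<\frac{k}{2}-1$. Then $$|\mathrm{WHom}^{ij}(P_m,P_n\square P_k)|=\sum_{h=0}^{m-1}\binom{m-1}{h}\,|\mathrm{Hom}^i(P_{h+1},P_n)|\,|\mathrm{WHom}^j(P_{m-h},P_k)|.$$
   Context: For a positive integer $n$, $P_n$ denotes the path with vertex set $\{0,1,\dots,n-1\}$ and edge set $\{\{i,i+1\} : i=0,\dots,n-2\}$. The Cartesian product $P_n\square P_k$ has vertex set $\{0,\dots,n-1\}\times\{0,\dots,k-1\}$, with $\{(a,u),(b,v)\}$ an edge iff either $a=b$ and $\{u,v\}\in E(P_k)$, or $\{a,b\}\in E(P_n)$ and $u=v$. A homomorphism $f:G\to H$ is a map $V(G)\to V(H)$ with $\{f(x),f(y)\}\in E(H)$ for all $\{x,y\}\in E(G)$; a weak homomorphism is a map with $f(x)=f(y)$ or $\{f(x),f(y)\}\in E(H)$ for all $\{x,y\}\in E(G)$. $\mathrm{Hom}^i(P_a,P_n)$ is the set of homomorphisms $f:P_a\to P_n$ with $f(0)=i$; $\mathrm{WHom}^j(P_a,P_k)$ is the set of weak homomorphisms $f:P_a\to P_k$ with $f(0)=j$; $\mathrm{WHom}^{ij}(P_m,P_n\square P_k)$ is the set of weak homomorphisms $f:P_m\to P_n\square P_k$ with $f(0)=(i,j)$. *)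

(* Defs.v *)
From mathcomp Require Import all_boot all_order all_algebra.
Set Implicit Arguments. Unset Strict Implicit. Unset Printing Implicit Defensive.

Definition path_adj (n : nat) : rel 'I_n :=
  fun a b => (a.+1 == b :> nat) || (b.+1 == a :> nat).

Definition box_adj (n k : nat) : rel ('I_n * 'I_k) :=
  fun x y => ((x.1 == y.1) && path_adj x.2 y.2) ||
             (path_adj x.1 y.1 && (x.2 == y.2)).

Definition is_hom (T U : finType) (eT : rel T) (eU : rel U) (f : T -> U) : bool :=
  [forall x, forall y, eT x y ==> eU (f x) (f y)].

Definition is_whom (T U : finType) (eT : rel T) (eU : rel U) (f : T -> U) : bool :=
  [forall x, forall y, eT x y ==> ((f x == f y) || eU (f x) (f y))].

Definition nHom (i a n : nat) : nat :=
  #|[set f : {ffun 'I_a -> 'I_n} |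
      is_hom (@path_adj a) (@path_adj n) f &&
      [forall x : 'I_a, (val x == 0) ==> (val (f x) == i)]]|.

Definition nWHom (j a k : nat) : nat :=
  #|[set f : {ffun 'I_a -> 'I_k} |
      is_whom (@path_adj a) (@path_adj k) f &&
      [forall x : 'I_a, (val x == 0) ==> (val (f x) == j)]]|.

Definition nWHom2 (i j m n k : nat) : nat :=
  #|[set f : {ffun 'I_m -> 'I_n * 'I_k} |
      is_whom (@path_adj m) (@box_adj n k) f &&
      [forall x : 'I_m, (val x == 0) ==>
         ((val (f x).1 == i) && (val (f x).2 == j))]]|.

(* Main.v *)
Require Import Defs.
From mathcomp Require Import all_boot all_order all_algebra.
From mathcomp Require Import lra.
Import GRing.Theory Num.Theory.
Set Implicit Arguments. Unset Strict Implicit. Unset Printing Implicit Defensive.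

Section Aux.
Variable U : finType.

Definition fcons a (u : U) (g : {ffun 'I_a -> U}) : {ffun 'I_a.+1 -> U} :=
  [ffun i => if unlift ord0 i is Some j then g j else u].
Definition ftail a (f : {ffun 'I_a.+1 -> U}) : {ffun 'I_a -> U} :=
  [ffun j => f (lift ord0 j)].

Lemma fcons0 a u (g : {ffun 'I_a -> U}) : fcons u g ord0 = u.
Proof. by rewrite ffunE unlift_none. Qed.

Lemma sum_cons a (F : {ffun 'I_a.+1 -> U} -> nat) :
  \sum_f F f = \sum_u \sum_(g : {ffun 'I_a -> U}) F (fcons u g).
Proof.
rewrite pair_big /=.
rewrite (reindex (fun p : U * {ffun 'I_a -> U} => fcons p.1 p.2)) //=.
apply: onW_bij.
exists (fun f : {ffun 'I_a.+1 -> U} => (f ord0, ftail f)) => [[u g] | f] /=.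
  rewrite fcons0; congr pair; apply/ffunP => j; by rewrite !ffunE liftK.
apply/ffunP => i; rewrite ffunE; case: unliftP => [j ->|->] //.
by rewrite ffunE.
Qed.

Lemma codom_cons a u (g : {ffun 'I_a -> U}) : codom (fcons u g) = u :: codom g.
Proof.
rewrite !codomE enum_ordSl /= fcons0; congr cons.
rewrite -map_comp; apply: eq_map => j /=; by rewrite ffunE liftK.
Qed.

Lemma nth_codom a x0 (f : {ffun 'I_a -> U}) (i : 'I_a) : nth x0 (codom f) i = f i.
Proof. by rewrite codomE (nth_map i) ?size_enum_ord // nth_ord_enum. Qed.

Lemma hom_sorted (r : rel U) a (f : {ffun 'I_a -> U}) : symmetric r ->
  [forall x, forall y, path_adj x y ==> r (f x) (f y)] = sorted r (codom f).
Proof.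
move=> sr; case: a f => [|a] f.
  rewrite codomE enum_ord0 /=; apply/forallP => -[] //.
apply/idP/idP.
  move=> H; apply/(sortedP (f ord0)) => i; rewrite size_codom card_ord => lt.
  have lt' : i < a.+1 by apply: ltnW.
  have := nth_codom (f ord0) f (Ordinal lt'); rewrite /= => ->.
  have := nth_codom (f ord0) f (Ordinal lt); rewrite /= => ->.
  have := forallP (forallP H (Ordinal lt')) (Ordinal lt).
  by rewrite /path_adj /= eqxx => /implyP; apply.
move/(sortedP (f ord0)) => H; apply/forallP => x; apply/forallP => y.
apply/implyP; rewrite /path_adj; case/orP => /eqP e.
  have := H x; rewrite size_codom card_ord e ltn_ord => /(_ isT).
  by rewrite !nth_codom.
have := H y; rewrite size_codom card_ord e ltn_ord => /(_ isT).
by rewrite !nth_codom sr.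
Qed.

Lemma start0 a (P : pred U) (f : {ffun 'I_a.+1 -> U}) :
  [forall x : 'I_a.+1, (val x == 0) ==> P (f x)] = P (f ord0).
Proof.
apply/forallP/idP => [H | H x]; first by have := H ord0; rewrite eqxx.
apply/implyP => /eqP x0.
by have -> : x = ord0 by apply: val_inj.
Qed.

Definition cnt (r : rel U) a (u : U) :=
  locked (\sum_(f : {ffun 'I_a.+1 -> U}) ((f ord0 == u) && sorted r (codom f))).
Lemma cntE r a u : cnt r a u = \sum_(f : {ffun 'I_a.+1 -> U}) ((f ord0 == u) && sorted r (codom f)).
Proof. by rewrite /cnt -lock. Qed.

Lemma sum_eq1 (V : finType) (j : V) (G : V -> nat) : \sum_i (i == j) * G i = G j.
Proof.
rewrite (bigD1 j) //= eqxx mul1n big1 ?addn0 // => i /negbTE ->; by rewrite mul0n.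
Qed.

Lemma sum_cond_mul (V : finType) (P : pred V) (F : V -> nat) :
  \sum_(i | P i) F i = \sum_i P i * F i.
Proof.
rewrite big_mkcond; apply: eq_bigr => i _; by case: (P i); rewrite ?mul1n ?mul0n.
Qed.

Lemma cnt0 r u : cnt r 0 u = 1.
Proof.
rewrite cntE sum_cons.
under eq_bigr => v _.
  under eq_bigr => g _ do rewrite fcons0 codom_cons codomE enum_ord0 /=.
  over.
rewrite /=.
rewrite (eq_bigr (fun v => (v == u) * 1)) ?sum_eq1 // => v _.
by rewrite sum_nat_const card_ffun card_ord expn0 andbT mul1n muln1.
Qed.

Lemma path_codom (r : rel U) a w (g : {ffun 'I_a.+1 -> U}) :
  path r w (codom g) = r w (g ord0) && sorted r (codom g).
Proof. by rewrite codomE enum_ordSl. Qed.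

Lemma cntS r a u : cnt r a.+1 u = \sum_(v | r u v) cnt r a v.
Proof.
under [RHS]eq_bigr => v _ do rewrite cntE.
rewrite cntE sum_cons.
under eq_bigr => w _.
  under eq_bigr => g _ do rewrite fcons0 codom_cons /= path_codom -mulnb.
  rewrite -big_distrr.
  over.
rewrite /= sum_eq1 sum_cond_mul.
under [RHS]eq_bigr => v _ do rewrite big_distrr.
rewrite exchange_big /=; apply: eq_bigr => g _.
rewrite -(sum_eq1 (g ord0) (fun v => r u v && sorted r (codom g))).
apply: eq_bigr => v _.
case: eqVneq => [->|/negbTE ne]; first by rewrite mul1n mulnb.
by rewrite mul0n muln0.
Qed.
Lemma sum_eq1' (V : finType) (j : V) (G : V -> nat) : \sum_i (j == i) * G i = G j.
Proof. rewrite -(sum_eq1 j G); apply: eq_bigr => i _; by rewrite eq_sym. Qed.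

Lemma collapse1 (V : finType) (x : V) :
  forall (W : finType) (H : V -> W -> nat),
  \sum_x' \sum_(y' : W) (x == x') * H x' y' = \sum_y' H x y'.
Proof.
move=> W H; under eq_bigr => x' _ do rewrite -big_distrr.
by rewrite sum_eq1'.
Qed.
End Aux.

Definition Wrel (U : eqType) (e : rel U) : rel U := fun p q => (p == q) || e p q.

Lemma path_adj_irr n (x : 'I_n) : path_adj x x = false.
Proof. by rewrite /path_adj orbb gtn_eqF. Qed.

Lemma path_adj_sym n : symmetric (@path_adj n).
Proof. by move=> x y; rewrite /path_adj orbC. Qed.

Lemma box_adj_sym n k : symmetric (@box_adj n k).
Proof.
move=> x y; rewrite /box_adj (eq_sym x.1) (eq_sym x.2) (path_adj_sym x.1) (path_adj_sym x.2) //.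
Qed.

Lemma Wrel_sym (U : eqType) (e : rel U) : symmetric e -> symmetric (Wrel e).
Proof. by move=> se x y; rewrite /Wrel eq_sym se. Qed.

Lemma Wrel_split (U : eqType) (e : rel U) x y : e x x = false ->
  (Wrel e x y : nat) = (x == y) + e x y.
Proof. by rewrite /Wrel; case: eqVneq => [<- ->|]. Qed.

Lemma sum_pair (V W : finType) (F : V * W -> nat) :
  \sum_p F p = \sum_a \sum_b F (a, b).
Proof. by rewrite pair_big; apply: eq_bigr => -[]. Qed.

Section Main.
Variables n k : nat.
Notation A := (cnt (@path_adj n)).
Notation B := (cnt (Wrel (@path_adj k))).
Notation C := (cnt (Wrel (@box_adj n k))).

Lemma A_rec h x : A h.+1 x = \sum_x' path_adj x x' * A h x'.
Proof. by rewrite cntS sum_cond_mul. Qed.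

Lemma B_rec l y : B l.+1 y = B l y + \sum_y' path_adj y y' * B l y'.
Proof.
rewrite cntS sum_cond_mul.
under eq_bigr => y' _ do rewrite Wrel_split ?path_adj_irr // mulnDl.
by rewrite big_split /= sum_eq1'.
Qed.

Lemma box_split (x a : 'I_n) (y b : 'I_k) :
  (Wrel (@box_adj n k) (x, y) (a, b) : nat) =
  (x == a) * (y == b) + (x == a) * path_adj y b + path_adj x a * (y == b).
Proof.
rewrite /Wrel /box_adj /= xpair_eqE.
case: (eqVneq x a) => [<-|nxa]; case: (eqVneq y b) => [<-|nyb];
  rewrite ?path_adj_irr /= ?muln0 ?mul0n ?addn0 ?add0n ?muln1 ?mul1n //.
all: by rewrite ?orbF ?andbT ?andbF.
Qed.

Lemma C_rec N x y : C N.+1 (x, y) = C N (x, y) + \sum_y' path_adj y y' * C N (x, y')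
   + \sum_x' path_adj x x' * C N (x', y).
Proof.
rewrite cntS sum_cond_mul sum_pair.
rewrite (eq_bigr (fun a => \sum_b (x == a) * (y == b) * C N (a, b) +
   \sum_b (x == a) * path_adj y b * C N (a, b) + \sum_b path_adj x a * (y == b) * C N (a, b)));
  last by move=> a _; rewrite -!big_split; apply: eq_bigr => b _; rewrite box_split !mulnDl.
rewrite !big_split /=.
have -> : \sum_a \sum_b (x == a) * (y == b) * C N (a, b) = C N (x, y).
  under eq_bigr => a _ do under eq_bigr => b _ do rewrite -mulnA.
  by rewrite collapse1 (sum_eq1' y (fun b => C N (x, b))).
have -> : \sum_a \sum_b (x == a) * path_adj y b * C N (a, b) =
          \sum_b path_adj y b * C N (x, b).
  under eq_bigr => a _ do under eq_bigr => b _ do rewrite -mulnA.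
  by rewrite collapse1.
congr (_ + _).
rewrite exchange_big /=.
under eq_bigr => b _ do under eq_bigr => a _ do rewrite (mulnC (path_adj x a)) -mulnA.
by rewrite (collapse1 y (fun b a => path_adj x a * C N (a, b))).
Qed.
End Main.

Lemma bump0 i : bump 0 i = i.+1.
Proof. by rewrite /bump leq0n. Qed.

Lemma pascal_sum (a b : nat -> nat) N :
  \sum_(h < N.+2) 'C(N.+1, h) * a h * b (N.+1 - h) =
  \sum_(h < N.+1) 'C(N, h) * a h * b (N.+1 - h) +
  \sum_(h < N.+1) 'C(N, h) * a h.+1 * b (N - h).
Proof.
rewrite big_ord_recl /=.
under eq_bigr => h _ do rewrite bump0 binS !mulnDl subSS.
rewrite big_split /= addnA; congr (_ + _).
rewrite [in RHS]big_ord_recl big_ord_recr /= (bin_small (ltnSn N)) !mul0n addn0 !bin0 !subn0.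
congr (_ + _); apply: eq_bigr => h _; by rewrite bump0 subSS.
Qed.

Section Main2.
Variables n k : nat.
Notation A := (cnt (@path_adj n)).
Notation B := (cnt (Wrel (@path_adj k))).
Notation C := (cnt (Wrel (@box_adj n k))).

Lemma mainid N : forall x y,
  C N (x, y) = \sum_(h < N.+1) 'C(N, h) * A h x * B (N - h) y.
Proof.
elim: N => [|N IH] x y.
  by rewrite big_ord1 !cnt0 bin0.
rewrite C_rec IH.
under eq_bigr => y' _ do rewrite IH.
under [X in _ + X]eq_bigr => x' _ do rewrite IH.
rewrite (pascal_sum (fun h => A h x) (fun l => B l y)).
have -> : \sum_(h < N.+1) 'C(N, h) * A h x * B (N.+1 - h) y =
  \sum_(h < N.+1) 'C(N, h) * A h x * B (N - h) y +
  \sum_(h < N.+1) 'C(N, h) * A h x * \sum_y' path_adj y y' * B (N - h) y'.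
  rewrite -big_split; apply: eq_bigr => h _.
  have hN : h <= N by rewrite -ltnS.
  by rewrite (subSn hN) B_rec mulnDr.
rewrite -!addnA; apply/eqP; rewrite eqn_add2l; apply/eqP.
have E1 : \sum_y' path_adj y y' * \sum_(h < N.+1) 'C(N, h) * A h x * B (N - h) y' =
  \sum_(h < N.+1) 'C(N, h) * A h x * \sum_y' path_adj y y' * B (N - h) y'.
  under eq_bigr => y' _ do rewrite big_distrr.
  rewrite exchange_big; apply: eq_bigr => h _.
  rewrite big_distrr; apply: eq_bigr => y' _.
  exact: mulnCA.
have E2 : \sum_x' path_adj x x' * \sum_(h < N.+1) 'C(N, h) * A h x' * B (N - h) y =
  \sum_(h < N.+1) 'C(N, h) * A h.+1 x * B (N - h) y.
  under eq_bigr => x' _ do rewrite big_distrr.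
  rewrite exchange_big; apply: eq_bigr => h _.
  rewrite A_rec big_distrr big_distrl; apply: eq_bigr => x' _.
  by rewrite /= !mulnA (mulnC (path_adj x x')).
exact: (congr2 addn E1 E2).
Qed.


End Main2.

Lemma card_set_sum (T : finType) (P : pred T) : #|[set x | P x]| = \sum_x P x.
Proof.
rewrite -sum1_card big_mkcond /=; apply: eq_bigr => x _; rewrite inE.
by case: (P x).
Qed.

Lemma nHom_cnt i h n (hi : i < n) : nHom i h.+1 n = cnt (@path_adj n) h (Ordinal hi).
Proof.
rewrite cntE /nHom card_set_sum; apply: eq_bigr => f _.
rewrite /is_hom hom_sorted; last exact: path_adj_sym.
have /= -> := start0 (fun q : 'I_n => val q == i) f.
rewrite andbC -[f ord0 == _]val_eqE //.
Qed.

Lemma nWHom_cnt j a b k (hj : j < k) : a = b.+1 ->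
  nWHom j a k = cnt (Wrel (@path_adj k)) b (Ordinal hj).
Proof.
move=> ->.
rewrite cntE /nWHom card_set_sum; apply: eq_bigr => f _.
rewrite /is_whom (hom_sorted (r := Wrel (@path_adj k))); last first.
  exact/Wrel_sym/path_adj_sym.
have /= -> := start0 (fun q : 'I_k => val q == j) f.
rewrite andbC -[f ord0 == _]val_eqE //.
Qed.

Lemma nWHom2_cnt i j N n k (hi : i < n) (hj : j < k) :
  nWHom2 i j N.+1 n k = cnt (Wrel (@box_adj n k)) N (Ordinal hi, Ordinal hj).
Proof.
rewrite cntE /nWHom2 card_set_sum; apply: eq_bigr => f _.
rewrite /is_whom (hom_sorted (r := Wrel (@box_adj n k))); last first.
  exact/Wrel_sym/box_adj_sym.
have /= -> := start0 (fun q : 'I_n * 'I_k => (val q.1 == i) && (val q.2 == j)) f.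
rewrite andbC; case: (f ord0) => a b.
by rewrite xpair_eqE -!val_eqE.
Qed.

Unset Implicit Arguments.
Theorem theorem3 (m n k i j : nat) :
  (0 < m)%N -> (0 < n)%N -> (0 < k)%N ->
  ((i%:R : rat) < (n%:R / 2 - 1))%R ->
  ((j%:R : rat) < (k%:R / 2 - 1))%R ->
  nWHom2 i j m n k =
  (\sum_(h < m) 'C(m - 1, h) * nHom i h.+1 n * nWHom j (m - h) k)%N.
Proof.
move=> m0 _ _ hi hj.
have hin : (i < n)%N.
  have hn : ((0 : rat) <= n%:R)%R by apply: ler0n.
  have h1 : ((i%:R : rat) < n%:R)%R by lra.
  by rewrite ltr_nat in h1.
have hjk : (j < k)%N.
  have hk : ((0 : rat) <= k%:R)%R by apply: ler0n.
  have h1 : ((j%:R : rat) < k%:R)%R by lra.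
  by rewrite ltr_nat in h1.
case: m m0 => // N _.
rewrite (nWHom2_cnt N hin hjk) mainid.
apply: eq_bigr => h _.
have hN : (h <= N)%N by rewrite -ltnS.
rewrite subn1 /= (nHom_cnt h hin) (nWHom_cnt hjk (subSn hN)).
by [].
Qed.
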